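(* Let $X_1,X_2$ be independent real random variables with densities symmetric about their means $\mu_1,\mu_2$ and positive on all of $\mathbb{R}$. Suppose the platform uses a weighted-quadratic disclosure (WQD) policy $\gamma$ with weights $0<w_1<\cdots<w_n<1$, and the receiver estimates by $\eta^\star$, where $\eta^\star((1,x_1),m)=(x_1,\mu_2)$ and $\eta^\star((2,x_2),m)=(\mu_1,x_2)$. For $\theta\in[0,1]$ and $m\in[n]$ the receiver's expected loss from sending $m$ is then $J_R(m\mid\theta)=L(w_m\mid\theta)$, where for $w\in[0,1]$ $$L(w\mid\theta)=\theta\,\mathbf{E}\big[(X_1-\mu_1)^2\mathbf{1}\big((1-w)(X_2-\mu_2)^2\ge w(X_1-\mu_1)^2\big)\big]+(1-\theta)\,\mathbf{E}\big[(X_2-\mu_2)^2\mathbf{1}\big((1-w)(X_2-\mu_2)^2< w(X_1-\mu_1)^2\big)\big].$$ Then the receiver's best response (a policy $\psi:[0,1]\to[n]$ with $\psi(\theta)\in\arg\min_{m\in[n]}L(w_m\mid\theta)$ for every $\theta$) is a monotone partition preference disclosure (MPPD) policy, whose thresholds $\theta^\star_{m,m+1}$, $1\le m<n$, are the solutions of $$L(w_m\mid\theta^\star_{m,m+1})=L(w_{m+1}\mid\theta^\star_{m,m+1}),$$ with corners $\theta^\star_{0,1}=0$ and $\theta^\star_{n,n+1}=1$.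
   Context: $[n]=\{1,\dots,n\}$. The receiver, with private preference $\theta\in[0,1]$, sends a message $m\in[n]$; the platform, observing $(m,x_1,x_2)$, discloses $s=\gamma(m,x_1,x_2)\in\{1,2\}$, i.e. the receiver sees $y=(s,x_s)$, and the loss is $\theta(x_1-\hat x_1)^2+(1-\theta)(x_2-\hat x_2)^2$ where $(\hat x_1,\hat x_2)$ is the receiver's estimate. A WQD policy with weights $w_1,\dots,w_n$ sets $\gamma(m,x_1,x_2)=1$ if $w_m(x_1-\mu_1)^2>(1-w_m)(x_2-\mu_2)^2$ and $\gamma(m,x_1,x_2)=2$ otherwise. A policy $\psi:[0,1]\to[n]$ is an MPPD policy if there are thresholds $0=\theta^\star_{0,1}<\theta^\star_{1,2}<\cdots<\theta^\star_{n-1,n}<\theta^\star_{n,n+1}=1$ such that $\psi(\theta)=m$ for all $\theta\in(\theta^\star_{m-1,m},\theta^\star_{m,m+1})$, $m\in[n]$. *)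

(* Defs.v *)
From HB Require Import structures.
From mathcomp Require Import all_boot all_order all_algebra.
From mathcomp Require Import all_classical all_reals all_analysis.
Set Implicit Arguments. Unset Strict Implicit. Unset Printing Implicit Defensive.
Import Order.TTheory GRing.Theory Num.Theory.
Local Open Scope classical_set_scope.
Local Open Scope ring_scope.

Notation leb R := (@lebesgue_measure R).

Definition sym_pos_density (R : realType) (f : R -> R) (mu : R) : Prop :=
  [/\ measurable_fun [set: R] f,
      (forall x, 0 < f x),
      (\int[leb R]_x (f x)%:E = 1)%E,
      (forall x, f (mu + x) = f (mu - x)) &
      (\int[leb R]_x (((x - mu) ^+ 2) * f x)%:E < +oo)%E].

(* E[g(X1,X2)] for independent X1, X2 with densities f1, f2:
   integral of g against the product density on R x R. *)
Definition Exp2 (R : realType) (f1 f2 : R -> R) (g : R * R -> R) : R :=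
  Rintegral ((leb R) \x (leb R))%E [set: R * R]
    (fun z => g z * (f1 z.1 * f2 z.2)).

Definition Lloss (R : realType) (f1 f2 : R -> R) (mu1 mu2 w theta : R) : R :=
  theta * Exp2 f1 f2 (fun z =>
     (z.1 - mu1) ^+ 2 *
     (if w * (z.1 - mu1) ^+ 2 <= (1 - w) * (z.2 - mu2) ^+ 2 then 1 else 0))
  + (1 - theta) * Exp2 f1 f2 (fun z =>
     (z.2 - mu2) ^+ 2 *
     (if (1 - w) * (z.2 - mu2) ^+ 2 < w * (z.1 - mu1) ^+ 2 then 1 else 0)).

Definition best_response (R : realType) (n : nat) (L : R -> R -> R)
    (w : nat -> R) (psi : R -> nat) : Prop :=
  forall theta, 0 <= theta <= 1 ->
    ((1 <= psi theta <= n)%N /\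
     forall m, (1 <= m <= n)%N -> L (w (psi theta)) theta <= L (w m) theta).

(* MPPD policy with thresholds t 0 = 0 < t 1 < ... < t (n-1) < t n = 1,
   where t m stands for theta*_{m,m+1}. *)
Definition MPPD_with (R : realType) (n : nat) (psi : R -> nat) (t : nat -> R) : Prop :=
  [/\ t 0%N = 0, t n = 1,
      (forall m, (m < n)%N -> t m < t m.+1) &
      (forall m, (1 <= m <= n)%N ->
         forall theta, t m.-1 < theta < t m -> psi theta = m)].

(* Main.v *)
Require Import Defs.
From HB Require Import structures.
From mathcomp Require Import all_boot all_order all_algebra.
From mathcomp Require Import all_classical all_reals all_analysis.
From mathcomp Require Import measurable_realfun.
From mathcomp Require Import ring lra zify.
Import Order.TTheory GRing.Theory Num.Theory.
Set Implicit Arguments. Unset Strict Implicit. Unset Printing Implicit Defensive.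
Local Open Scope classical_set_scope.
Local Open Scope ring_scope.

Lemma chain_lt (R : realType) (s : nat -> R) a b :
  (forall j, (a <= j < b)%N -> s j < s j.+1) -> (a < b)%N -> s a < s b.
Proof.
elim: b => [//|b IH] H ab.
have [->|ne] := eqVneq a b; first by apply: H; lia.
have ab' : (a < b)%N by move: ne ab; lia.
apply: lt_trans (IH _ ab') _; last by apply: H; lia.
by move=> j jb; apply: H; lia.
Qed.

Lemma chain_le (R : realType) (s : nat -> R) a b :
  (forall j, (a <= j < b)%N -> s j < s j.+1) -> (a <= b)%N -> s a <= s b.
Proof.
move=> H; rewrite leq_eqVlt => /orP[/eqP->//|ab].
exact/ltW/chain_lt.
Qed.

Definition Lin (R : realType) (A B : R -> R) (w th : R) := th * A w + (1 - th) * B w.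

Lemma combi (R : realType) (A B : R -> R) (n : nat) (w : nat -> R) (psi : R -> nat) :
  (0 < n)%N -> 0 < w 1%N ->
  (forall m, (1 <= m < n)%N -> w m < w m.+1) -> w n < 1 ->
  (forall a b, 0 < a -> a < b -> b < 1 ->
     Lin A B a a < Lin A B b a /\ Lin A B b b < Lin A B a b) ->
  best_response n (Lin A B) w psi ->
  exists t : nat -> R,
    MPPD_with n psi t /\
    (forall m, (1 <= m < n)%N ->
       Lin A B (w m) (t m) = Lin A B (w m.+1) (t m) /\
       (forall theta, 0 <= theta <= 1 ->
          Lin A B (w m) theta = Lin A B (w m.+1) theta -> theta = t m)).
Proof.
move=> n0 w1 wI wn key br.
set L := Lin A B.
have wmono i j : (1 <= i)%N -> (i <= j)%N -> (j <= n)%N -> w i <= w j.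
  move=> i1 ij jn; apply: chain_le ij => k /andP[ik kj]; apply: wI.
  by apply/andP; split; [exact: leq_trans i1 ik| exact: leq_trans kj jn].
have w01 m : (1 <= m <= n)%N -> 0 < w m < 1.
  move=> /andP[m1 mn]; apply/andP; split.
    by apply: lt_le_trans w1 (wmono _ _ _ _ _).
  by apply: le_lt_trans (wmono _ _ _ _ _) wn.
pose c m := B (w m.+1) - B (w m).
pose d m := (A (w m.+1) - A (w m)) - c m.
pose t m := if m == 0%N then 0 else if (m < n)%N then - c m / d m else 1.
have DE m th : L (w m.+1) th - L (w m) th = c m + th * d m.
  by rewrite /L /Lin /d /c; ring.
have wm01 m : (1 <= m < n)%N -> 0 < w m /\ w m.+1 < 1.
  move=> /andP[m1 mn].
  have /andP[a0 _] : 0 < w m < 1 by apply: w01; lia.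
  have /andP[_ b1] : 0 < w m.+1 < 1 by apply: w01; lia.
  by [].
have Dpos m : (1 <= m < n)%N -> c m + w m * d m > 0 /\ c m + w m.+1 * d m < 0.
  move=> mn; have [a0 b1] := wm01 m mn.
  have ab := wI m mn.
  have [k1 k2] := key _ _ a0 ab b1.
  by split; rewrite -DE; [rewrite subr_gt0|rewrite subr_lt0].
have dneg m : (1 <= m < n)%N -> d m < 0.
  move=> mn; have [h1 h2] := Dpos m mn; have ab := wI m mn.
  have : d m * (w m.+1 - w m) < 0 by lra.
  by rewrite pmulr_llt0 // subr_gt0.
have tE m : (1 <= m < n)%N -> t m = - c m / d m.
  by move=> /andP[m1 mn]; rewrite /t mn; case: m m1 {mn}.
have DtE m th : (1 <= m < n)%N -> c m + th * d m = d m * (th - t m).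
  move=> mn; have dn := dneg m mn; rewrite tE //.
  by field; rewrite lt_eqF.
have tw m : (1 <= m < n)%N -> w m < t m < w m.+1.
  move=> mn; have [h1 h2] := Dpos m mn; have dn := dneg m mn.
  rewrite !DtE // in h1 h2.
  rewrite (nmulr_rgt0 _ dn) in h1; rewrite (nmulr_rlt0 _ dn) in h2.
  apply/andP; split; lra.
have t0 : t 0%N = 0 by [].
have tn k : (n <= k)%N -> t k = 1.
  by move=> nk; rewrite /t; case: k nk => [|k] nk; [lia| rewrite ltnNge nk].
have tstep m : (m < n)%N -> t m < t m.+1.
  case: m => [|m] mn.
    rewrite t0; have [h|h] := ltnP 1 n.
      have /andP[h1 _] := tw 1%N (h : (1 <= 1 < n)%N); exact: lt_trans w1 h1.
    by rewrite tn // ltr01.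
  have /andP[_ h1] := tw m.+1 (mn : (1 <= m.+1 < n)%N).
  apply: lt_trans h1 _; have [h|h] := ltnP m.+2 n.
    by have /andP[h2 _] := tw m.+2 (h : (1 <= m.+2 < n)%N).
  have e : m.+2 = n by lia.
  by rewrite tn // -e in wn *.
have tmono i j : (i <= j)%N -> (j <= n)%N -> t i <= t j.
  move=> ij jn; apply: chain_le ij => k kj; apply: tstep; lia.
have t01 k : 0 <= t k <= 1.
  have [kn|kn] := leqP k n.
    by rewrite -t0 -(tn n) // !tmono.
  by rewrite tn ?ler01 ?lexx //; lia.
have Dd m th : (1 <= m < n)%N -> L (w m.+1) th - L (w m) th = d m * (th - t m).
  by move=> mn; rewrite DE DtE.
exists t; split.
  split => //; first by rewrite tn.
  move=> m /andP[m1 mn] th /andP[th1 th2].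
  have h01 : 0 <= th <= 1.
    have := t01 m.-1; have := t01 m; move=> /andP[_ a] /andP[b _].
    apply/andP; split; [exact: le_trans b (ltW th1)| exact: le_trans (ltW th2) a].
  have [/andP[k1 kn] kle] := br th h01.
  have up j : (m < j <= n)%N -> L (w m) th < L (w j) th.
    move=> /andP[mj jn]; apply: (@chain_lt _ (fun j => L (w j) th)) mj => i im.
    rewrite -subr_gt0 Dd; last by lia.
    rewrite nmulr_rgt0; last by apply: dneg; lia.
    rewrite subr_lt0; apply: lt_le_trans th2 _; apply: tmono; lia.
  have down j : (1 <= j < m)%N -> L (w m) th < L (w j) th.
    move=> /andP[j1 jm]; rewrite -ltrN2.
    apply: (@chain_lt _ (fun j => - L (w j) th)) jm => i im.
    rewrite ltrN2 -subr_lt0 Dd; last by lia.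
    rewrite nmulr_rlt0; last by apply: dneg; lia.
    rewrite subr_gt0; apply: le_lt_trans th1; apply: tmono; lia.
  suff: ~ (psi th < m)%N /\ ~ (m < psi th)%N by lia.
  split=> km.
    have := kle m ltac:(lia); have := down (psi th) ltac:(lia).
    by move=> a b; have := lt_le_trans a b; rewrite ltxx.
  have := kle m ltac:(lia); have := up (psi th) ltac:(lia).
  by move=> a b; have := lt_le_trans a b; rewrite ltxx.
move=> m mn; split.
  by apply/eqP; rewrite eq_sym -subr_eq0 Dd // subrr mulr0.
move=> th _ /eqP; rewrite eq_sym -subr_eq0 Dd // mulf_eq0 (lt_eqF (dneg m mn)) /=.
by rewrite subr_eq0 => /eqP.
Qed.

Lemma prod_int (R : realType) (p q : R -> R) :
  measurable_fun [set: R] p -> measurable_fun [set: R] q ->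
  (forall x, 0 <= p x) -> (forall x, 0 <= q x) ->
  (\int[leb R]_x (p x)%:E < +oo)%E -> (\int[leb R]_x (q x)%:E < +oo)%E ->
  ((leb R) \x (leb R))%E.-integrable [set: R * R] (fun z => (p z.1 * q z.2)%:E).
Proof.
move=> mp mq p0 q0 ip iq.
have mpq : measurable_fun [set: R * R] (fun z : R * R => p z.1 * q z.2).
  apply: measurable_funM.
    exact: measurableT_comp mp measurable_fst.
  exact: measurableT_comp mq measurable_snd.
have mqE : measurable_fun [set: R] (fun y => (q y)%:E) by exact/measurable_EFinP.
have mpE : measurable_fun [set: R] (fun y => (p y)%:E) by exact/measurable_EFinP.
have q0E : forall y, [set: R] y -> (0 <= (q y)%:E)%E by move=> y _; rewrite lee_fin.
have p0E : forall y, [set: R] y -> (0 <= (p y)%:E)%E by move=> y _; rewrite lee_fin.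
have Iq0 : (0 <= \int[leb R]_x (q x)%:E)%E by exact: integral_ge0.
apply/integrable12ltyP; first exact/measurable_EFinP.
under eq_integral => x _.
  under eq_integral => y _ do rewrite /= ger0_norm ?mulr_ge0 // EFinM.
  rewrite ge0_integralZl ?lee_fin //.
  over.
rewrite /= ge0_integralZr //.
apply: lte_mul_pinfty => //.
exact: integral_ge0.
by rewrite ge0_fin_numE // integral_ge0.
Qed.

Lemma dens_fin (R : realType) (f : R -> R) (mu : R) :
  sym_pos_density f mu ->
  [/\ measurable_fun [set: R] (fun x => ((x - mu) ^+ 2 + 1) * f x),
      (forall x, 0 <= ((x - mu) ^+ 2 + 1) * f x) &
      (\int[leb R]_x (((x - mu) ^+ 2 + 1) * f x)%:E < +oo)%E].
Proof.
case=> mf fpos int1 _ mom.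
have mY : measurable_fun [set: R] (fun x : R => (x - mu) ^+ 2).
  apply: measurable_funX; apply: measurable_funB => //; exact: measurable_cst.
have mYf : measurable_fun [set: R] (fun x : R => (x - mu) ^+ 2 * f x).
  exact: measurable_funM.
split.
- by apply: measurable_funM => //; apply: measurable_funD => //; exact: measurable_cst.
- by move=> x; rewrite mulr_ge0 ?addr_ge0 ?sqr_ge0 ?ltW.
under eq_integral => x _ do rewrite mulrDl mul1r EFinD.
rewrite ge0_integralD //.
- by rewrite int1 lte_add_pinfty // ltry.
- by move=> x _; rewrite lee_fin mulr_ge0 ?sqr_ge0 ?ltW.
- exact/measurable_EFinP.
- by move=> x _; rewrite lee_fin ltW.
- exact/measurable_EFinP.
Qed.

Lemma dom_int (R : realType) (f1 f2 : R -> R) (mu1 mu2 K : R) (h : R * R -> R) :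
  sym_pos_density f1 mu1 -> sym_pos_density f2 mu2 ->
  measurable_fun [set: R * R] h ->
  (forall z, `|h z| <= K * (((z.1 - mu1) ^+ 2 + (z.2 - mu2) ^+ 2) * (f1 z.1 * f2 z.2))) ->
  ((leb R) \x (leb R))%E.-integrable [set: R * R] (EFin \o h).
Proof.
move=> H1 H2 mh hle.
have [mp p0 ip] := dens_fin H1.
have [mq q0 iq] := dens_fin H2.
have := prod_int mp mq p0 q0 ip iq.
move/(integrableZl measurableT `|K|).
apply: le_integrable => //; first exact/measurable_EFinP.
move=> z _; rewrite /= lee_fin.
have f1p : 0 <= f1 z.1 by case: H1 => _ /(_ z.1) /ltW.
have f2p : 0 <= f2 z.2 by case: H2 => _ /(_ z.2) /ltW.
rewrite [X in _ <= X]ger0_norm; last by rewrite !mulr_ge0 ?addr_ge0 ?sqr_ge0.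
apply: le_trans (hle z) _.
set Y1 := (z.1 - mu1) ^+ 2; set Y2 := (z.2 - mu2) ^+ 2.
have Y10 : 0 <= Y1 by exact: sqr_ge0.
have Y20 : 0 <= Y2 by exact: sqr_ge0.
set P := f1 z.1 * f2 z.2.
have P0 : 0 <= P by exact: mulr_ge0.
have -> : (Y1 + 1) * f1 z.1 * ((Y2 + 1) * f2 z.2) = ((Y1 + 1) * (Y2 + 1)) * P.
  by rewrite /P; ring.
have X0 : 0 <= (Y1 + Y2) * P by rewrite mulr_ge0 ?addr_ge0.
apply: le_trans (_ : `|K| * ((Y1 + Y2) * P) <= _).
  by apply: ler_wpM2r => //; exact: ler_norm.
apply: ler_wpM2l => //; apply: ler_wpM2r => //; nra.
Qed.

Definition g1 (R : realType) (mu1 mu2 w : R) (z : R * R) : R :=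
  (z.1 - mu1) ^+ 2 *
     (if w * (z.1 - mu1) ^+ 2 <= (1 - w) * (z.2 - mu2) ^+ 2 then 1 else 0).
Definition g2 (R : realType) (mu1 mu2 w : R) (z : R * R) : R :=
  (z.2 - mu2) ^+ 2 *
     (if (1 - w) * (z.2 - mu2) ^+ 2 < w * (z.1 - mu1) ^+ 2 then 1 else 0).
Definition dens (R : realType) (f1 f2 : R -> R) (z : R * R) : R := f1 z.1 * f2 z.2.

Section meas.
Local Ltac meas := repeat first
  [ assumption
  | exact: measurable_cst
  | exact: measurable_fst
  | exact: measurable_snd
  | apply: measurable_funM
  | apply: measurable_funD
  | apply: measurable_funB
  | apply: measurable_funX
  | apply: measurable_fun_ifT
  | apply: measurable_fun_ler
  | apply: measurable_fun_ltr ].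

Lemma mg1 (R : realType) (mu1 mu2 w : R) : measurable_fun [set: R * R] (g1 mu1 mu2 w).
Proof. rewrite /g1; meas. Qed.
Lemma mg2 (R : realType) (mu1 mu2 w : R) : measurable_fun [set: R * R] (g2 mu1 mu2 w).
Proof. rewrite /g2; meas. Qed.
Lemma mdens (R : realType) (f1 f2 : R -> R) :
  measurable_fun [set: R] f1 -> measurable_fun [set: R] f2 ->
  measurable_fun [set: R * R] (dens f1 f2).
Proof.
move=> m1 m2; rewrite /dens; apply: measurable_funM.
  exact: measurableT_comp m1 measurable_fst.
exact: measurableT_comp m2 measurable_snd.
Qed.
End meas.

Notation mu2d R := ((leb R) \x (leb R))%E.

Lemma Y_ge0 (R : realType) (x m : R) : 0 <= (x - m) ^+ 2.
Proof. exact: sqr_ge0. Qed.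

Lemma dens_ge0 (R : realType) (f1 f2 : R -> R) mu1 mu2 z :
  sym_pos_density f1 mu1 -> sym_pos_density f2 mu2 -> 0 <= dens f1 f2 z.
Proof.
case=> _ p1 _ _ _ [_ p2 _ _ _]; rewrite /dens mulr_ge0 // ltW //.
Qed.

Lemma ig1 (R : realType) (f1 f2 : R -> R) mu1 mu2 w K :
  sym_pos_density f1 mu1 -> sym_pos_density f2 mu2 ->
  (mu2d R).-integrable [set: R * R]
     (EFin \o (fun z => K * (g1 mu1 mu2 w z * dens f1 f2 z))).
Proof.
move=> H1 H2; apply: (@dom_int _ f1 f2 mu1 mu2 `|K|) => //.
  apply: measurable_funM; first exact: measurable_cst.
  apply: measurable_funM; first exact: mg1.
  by apply: mdens; [case: H1|case: H2].
move=> z; rewrite normrM; apply: ler_wpM2l => //.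
have d0 := dens_ge0 z H1 H2.
have Y1 := Y_ge0 z.1 mu1; have Y2 := Y_ge0 z.2 mu2.
rewrite /g1 /dens in d0 *; case: ifP => _; rewrite ?mulr1 ?mulr0 ?mul0r ?normr0.
  rewrite ger0_norm; last exact: mulr_ge0.
  by apply: ler_wpM2r => //; rewrite lerDl.
by rewrite mulr_ge0 // addr_ge0.
Qed.

Lemma ig2 (R : realType) (f1 f2 : R -> R) mu1 mu2 w K :
  sym_pos_density f1 mu1 -> sym_pos_density f2 mu2 ->
  (mu2d R).-integrable [set: R * R]
     (EFin \o (fun z => K * (g2 mu1 mu2 w z * dens f1 f2 z))).
Proof.
move=> H1 H2; apply: (@dom_int _ f1 f2 mu1 mu2 `|K|) => //.
  apply: measurable_funM; first exact: measurable_cst.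
  apply: measurable_funM; first exact: mg2.
  by apply: mdens; [case: H1|case: H2].
move=> z; rewrite normrM; apply: ler_wpM2l => //.
have d0 := dens_ge0 z H1 H2.
have Y1 := Y_ge0 z.1 mu1; have Y2 := Y_ge0 z.2 mu2.
rewrite /g2 /dens in d0 *; case: ifP => _; rewrite ?mulr1 ?mulr0 ?mul0r ?normr0.
  rewrite ger0_norm; last exact: mulr_ge0.
  by apply: ler_wpM2r => //; rewrite lerDr.
by rewrite mulr_ge0 // addr_ge0.
Qed.

Lemma Lloss_G (R : realType) (f1 f2 : R -> R) mu1 mu2 w th :
  sym_pos_density f1 mu1 -> sym_pos_density f2 mu2 ->
  Lloss f1 f2 mu1 mu2 w th =
  \int[mu2d R]_(z in [set: R * R])
     ((th * g1 mu1 mu2 w z + (1 - th) * g2 mu1 mu2 w z) * dens f1 f2 z).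
Proof.
move=> H1 H2.
transitivity (th * \int[mu2d R]_(z in [set: R * R]) (g1 mu1 mu2 w z * dens f1 f2 z)
  + (1 - th) * \int[mu2d R]_(z in [set: R * R]) (g2 mu1 mu2 w z * dens f1 f2 z)).
  by [].
have i1 : (mu2d R).-integrable [set: R * R]
    (EFin \o (fun z => g1 mu1 mu2 w z * dens f1 f2 z)).
  by apply: eq_integrable (ig1 w 1 H1 H2) => //= z _; rewrite mul1r.
have i2 : (mu2d R).-integrable [set: R * R]
    (EFin \o (fun z => g2 mu1 mu2 w z * dens f1 f2 z)).
  by apply: eq_integrable (ig2 w 1 H1 H2) => //= z _; rewrite mul1r.
rewrite -!RintegralZl // -RintegralD //; last 2 first.
- exact: (ig1 w th H1 H2).
- exact: (ig2 w (1 - th) H1 H2).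
by apply: eq_Rintegral => z _; ring.
Qed.

Lemma Rint_pos (R : realType) (h : R * R -> R) (u1 u2 v1 v2 : R) :
  measurable_fun [set: R * R] h -> (forall z, 0 <= h z) ->
  (mu2d R).-integrable [set: R * R] (EFin \o h) ->
  u1 < u2 -> v1 < v2 ->
  (forall z, u1 <= z.1 <= u2 -> v1 <= z.2 <= v2 -> 0 < h z) ->
  0 < \int[mu2d R]_(z in [set: R * R]) h z.
Proof.
move=> mh h0 ih u12 v12 hpos.
have absE : (\int[mu2d R]_(z in [set: R * R]) `|(EFin \o h) z|
            = \int[mu2d R]_(z in [set: R * R]) (h z)%:E)%E.
  by apply: eq_integral => z _; rewrite /= ger0_norm.
apply: fine_gt0; apply/andP; split; last first.
  by case/integrableP: ih => _; rewrite absE.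
rewrite lt0e integral_ge0 ?andbT; last by move=> z _; rewrite lee_fin.
apply/negP => /eqP I0.
have mhE : measurable_fun [set: R * R] (EFin \o h) by exact/measurable_EFinP.
have := (ae_eq_integral_abs (mu2d R) measurableT mhE).1.
rewrite absE => /(_ I0) [N [mN N0 sub]].
have sr : (`[u1, u2]%classic `*` `[v1, v2]%classic) `<=` N.
  move=> z [/= z1 z2]; apply: sub => /= /(_ I) /eqP.
  rewrite eqe; apply/negP; rewrite gt_eqF //; apply: hpos.
    by move: z1; rewrite in_itv.
  by move: z2; rewrite in_itv.
have mr : measurable (`[u1, u2]%classic `*` `[v1, v2]%classic : set (R * R)).
  by apply: measurableX; exact: measurable_itv.
have : ((mu2d R) (`[u1, u2]%classic `*` `[v1, v2]%classic) <= 0)%E.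
  by rewrite -N0; apply: le_measure => //; rewrite inE.
rewrite product_measure1E; try exact: measurable_itv.
change ((leb R `[u1,u2]%classic * leb R `[v1,v2]%classic <= 0)%E -> False).
rewrite !lebesgue_measure_itv /= !lte_fin u12 v12 -!EFinD -EFinM lee_fin.
by rewrite leNgt mulr_gt0 // subr_gt0.
Qed.

Definition Gf (R : realType) (mu1 mu2 w th : R) (z : R * R) : R :=
  th * g1 mu1 mu2 w z + (1 - th) * g2 mu1 mu2 w z.

Lemma G_min (R : realType) (mu1 mu2 w th : R) z :
  0 <= th <= 1 -> Gf mu1 mu2 th th z <= Gf mu1 mu2 w th z.
Proof.
move=> /andP[t0 t1]; rewrite /Gf /g1 /g2.
set Y1 := (z.1 - mu1) ^+ 2; set Y2 := (z.2 - mu2) ^+ 2.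
have Y10 : 0 <= Y1 by exact: sqr_ge0.
have Y20 : 0 <= Y2 by exact: sqr_ge0.
have [c1|c1] := leP (th * Y1) ((1 - th) * Y2);
have [c2|c2] := ltP ((1 - th) * Y2) (th * Y1);
have [c3|c3] := leP (w * Y1) ((1 - w) * Y2);
have [c4|c4] := ltP ((1 - w) * Y2) (w * Y1);
rewrite ?mulr1 ?mulr0; lra.
Qed.

Lemma G_strict (R : realType) (mu1 mu2 a b : R) z :
  a * (z.1 - mu1) ^+ 2 < (1 - a) * (z.2 - mu2) ^+ 2 ->
  (1 - b) * (z.2 - mu2) ^+ 2 < b * (z.1 - mu1) ^+ 2 ->
  Gf mu1 mu2 a a z < Gf mu1 mu2 b a z /\ Gf mu1 mu2 b b z < Gf mu1 mu2 a b z.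
Proof.
rewrite /Gf /g1 /g2.
set Y1 := (z.1 - mu1) ^+ 2; set Y2 := (z.2 - mu2) ^+ 2 => h1 h2.
have -> : (a * Y1 <= (1 - a) * Y2) = true by apply/idP; exact: ltW.
have -> : ((1 - a) * Y2 < a * Y1) = false by apply/negbTE; rewrite -leNgt ltW.
have -> : (b * Y1 <= (1 - b) * Y2) = false by apply/negbTE; rewrite -ltNge.
have -> : ((1 - b) * Y2 < b * Y1) = true by [].
rewrite !mulr1 !mulr0; split; lra.
Qed.

Lemma small_delta (R : realType) (e1 e2 K1 K2 : R) :
  0 < e1 -> 0 < e2 -> 0 <= K1 -> 0 <= K2 ->
  exists d : R, [/\ 0 < d, d <= 1, K1 * d < e1 & K2 * d < e2].
Proof.
move=> e10 e20 K10 K20.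
pose p := e1 / (K1 + 1); pose q := e2 / (K2 + 1).
have p0 : 0 < p by rewrite divr_gt0 // ltr_wpDl.
have q0 : 0 < q by rewrite divr_gt0 // ltr_wpDl.
exists (Num.min 1 (Num.min p q)); split.
- by rewrite lt_min ltr01 lt_min p0 q0.
- by rewrite ge_min lexx.
- have : Num.min 1 (Num.min p q) <= p by rewrite ge_min ge_min lexx orbT.
  rewrite /p ler_pdivlMr ?ltr_wpDl // => h.
  have : 0 < Num.min 1 (Num.min p q) by rewrite lt_min ltr01 lt_min p0 q0.
  move: (Num.min 1 (Num.min p q)) h => d h d0; nra.
- have : Num.min 1 (Num.min p q) <= q by rewrite ge_min ge_min lexx !orbT.
  rewrite /q ler_pdivlMr ?ltr_wpDl // => h.
  have : 0 < Num.min 1 (Num.min p q) by rewrite lt_min ltr01 lt_min p0 q0.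
  move: (Num.min 1 (Num.min p q)) h => d h d0; nra.
Qed.

Lemma rect (R : realType) (mu1 mu2 a b : R) :
  0 < a -> a < b -> b < 1 ->
  exists u1 u2 v1 v2 : R, [/\ u1 < u2, v1 < v2 &
    forall z : R * R, u1 <= z.1 <= u2 -> v1 <= z.2 <= v2 ->
      a * (z.1 - mu1) ^+ 2 < (1 - a) * (z.2 - mu2) ^+ 2 /\
      (1 - b) * (z.2 - mu2) ^+ 2 < b * (z.1 - mu1) ^+ 2].
Proof.
move=> a0 ab b1.
have a1 : 0 < 1 - a by lra.
have b1' : 0 < 1 - b by lra.
pose ra := a / (1 - a); pose rb := b / (1 - b).
have raE : ra * (1 - a) = a by rewrite /ra; field; rewrite gt_eqF.
have rbE : rb * (1 - b) = b by rewrite /rb; field; rewrite gt_eqF.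
have ra0 : 0 < ra by rewrite /ra divr_gt0.
have rab : ra < rb by nra.
pose g := (ra + rb) / 2.
have gE : g * 2 = ra + rb by rewrite /g; field.
have ga : a < (1 - a) * g by nra.
have gb : (1 - b) * g < b by nra.
have g0 : 0 <= g by nra.
pose s := Num.sqrt g.
have s0 : 0 <= s by exact: sqrtr_ge0.
have ss : s * s = g by rewrite -expr2 sqr_sqrtr.
have [d [d0 d1 h1 h2]] := @small_delta _ ((1 - a) * g - a) (b - (1 - b) * g)
  (3 * a) ((1 - b) * (2 * s + 1)) ltac:(lra) ltac:(lra) ltac:(lra)
  ltac:(apply: mulr_ge0; lra).
exists (mu1 + 1), (mu1 + 1 + d), (mu2 + s), (mu2 + s + d); split; try lra.
move=> z /andP[z1 z2] /andP[z3 z4].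
set u := z.1 - mu1; set v := z.2 - mu2.
have u1 : 1 <= u by rewrite /u; lra.
have u2 : u <= 1 + d by rewrite /u; lra.
have v1 : s <= v by rewrite /v; lra.
have v2 : v <= s + d by rewrite /v; lra.
have U1 : u ^+ 2 <= 1 + 3 * d by rewrite expr2; nra.
have U2 : 1 <= u ^+ 2 by rewrite expr2; nra.
have V1 : g <= v ^+ 2 by rewrite expr2 -ss; nra.
have V2 : v ^+ 2 <= g + (2 * s + 1) * d by rewrite expr2 -ss; nra.
split; nra.
Qed.

Lemma iG (R : realType) (f1 f2 : R -> R) mu1 mu2 w th :
  sym_pos_density f1 mu1 -> sym_pos_density f2 mu2 ->
  (mu2d R).-integrable [set: R * R]
     (EFin \o (fun z => (th * g1 mu1 mu2 w z + (1 - th) * g2 mu1 mu2 w z) * dens f1 f2 z)).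
Proof.
move=> H1 H2.
have := integrableD measurableT (ig1 w th H1 H2) (ig2 w (1 - th) H1 H2).
by apply: eq_integrable => // z _ /=; rewrite -EFinD; congr EFin; ring.
Qed.

Lemma diff_pos (R : realType) (f1 f2 : R -> R) mu1 mu2 w th (u1 u2 v1 v2 : R) :
  sym_pos_density f1 mu1 -> sym_pos_density f2 mu2 -> 0 <= th <= 1 ->
  u1 < u2 -> v1 < v2 ->
  (forall z : R * R, u1 <= z.1 <= u2 -> v1 <= z.2 <= v2 ->
     Gf mu1 mu2 th th z < Gf mu1 mu2 w th z) ->
  Lloss f1 f2 mu1 mu2 th th < Lloss f1 f2 mu1 mu2 w th.
Proof.
move=> H1 H2 th01 u12 v12 hr.
rewrite !Lloss_G // -subr_gt0 -RintegralB //; last 2 first.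
- exact: iG.
- exact: iG.
have md : measurable_fun [set: R * R] (dens f1 f2).
  by apply: mdens; [case: H1|case: H2].
have mG v t : measurable_fun [set: R * R]
   (fun z => (t * g1 mu1 mu2 v z + (1 - t) * g2 mu1 mu2 v z) * dens f1 f2 z).
  apply: measurable_funM => //; apply: measurable_funD; apply: measurable_funM;
  by [exact: measurable_cst|exact: mg1|exact: mg2].
apply: (Rint_pos _ _ _ u12 v12).
- exact: measurable_funB.
- move=> z; rewrite -mulrBl mulr_ge0 ?(dens_ge0 z H1 H2) // subr_ge0.
  exact: (G_min mu1 mu2 w z th01).
- exact: (integrableB measurableT (iG w th H1 H2) (iG th th H1 H2)).
- move=> z zu zv; rewrite -mulrBl mulr_gt0 // ?subr_gt0; first exact: hr.
  by case: H1 => _ p1 _ _ _; case: H2 => _ p2 _ _ _; rewrite /dens mulr_gt0.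
Qed.

Lemma key_ineq (R : realType) (f1 f2 : R -> R) mu1 mu2 (a b : R) :
  sym_pos_density f1 mu1 -> sym_pos_density f2 mu2 ->
  0 < a -> a < b -> b < 1 ->
  Lloss f1 f2 mu1 mu2 a a < Lloss f1 f2 mu1 mu2 b a /\
  Lloss f1 f2 mu1 mu2 b b < Lloss f1 f2 mu1 mu2 a b.
Proof.
move=> H1 H2 a0 ab b1.
have [u1 [u2 [v1 [v2 [u12 v12 hr]]]]] := rect mu1 mu2 a0 ab b1.
split.
  apply: (diff_pos H1 H2 _ u12 v12); first by apply/andP; split; lra.
  by move=> z zu zv; have [h1 h2] := hr z zu zv; have [] := G_strict h1 h2.
apply: (diff_pos H1 H2 _ u12 v12); first by apply/andP; split; lra.
by move=> z zu zv; have [h1 h2] := hr z zu zv; have [] := G_strict h1 h2.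
Qed.

Unset Implicit Arguments.
Local Close Scope classical_set_scope.
Local Open Scope ring_scope.

Theorem lemma3 (R : realType) (f1 f2 : R -> R) (mu1 mu2 : R)
    (n : nat) (w : nat -> R) (psi : R -> nat) :
  sym_pos_density f1 mu1 ->
  sym_pos_density f2 mu2 ->
  (0 < n)%N ->
  0 < w 1%N ->
  (forall m, (1 <= m < n)%N -> w m < w m.+1) ->
  w n < 1 ->
  best_response n (Lloss f1 f2 mu1 mu2) w psi ->
  exists t : nat -> R,
    MPPD_with n psi t /\
    (forall m, (1 <= m < n)%N ->
       Lloss f1 f2 mu1 mu2 (w m) (t m) = Lloss f1 f2 mu1 mu2 (w m.+1) (t m) /\
       (forall theta, 0 <= theta <= 1 ->
          Lloss f1 f2 mu1 mu2 (w m) theta = Lloss f1 f2 mu1 mu2 (w m.+1) theta ->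
          theta = t m)).
Proof.
move=> H1 H2 n0 w1 wI wn br.
apply: (@combi R (fun v => Exp2 f1 f2 (g1 mu1 mu2 v))
                 (fun v => Exp2 f1 f2 (g2 mu1 mu2 v)) n w psi n0 w1 wI wn _ br).
move=> a b a0 ab b1; exact: (key_ineq H1 H2 a0 ab b1).
Qed.
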